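(* Let $G,H$ be finite groups and $f:G\to H$ an identity preserving function. Suppose $A\le H$ is an abelian subgroup with $[G,G;f]\le A$, $K\le\mathrm{Stab}_G(f)$ is a subgroup with $\gcd([G:K],|A|)=1$, $m$ is an integer with $m\,[G:K]\equiv 1\pmod{|A|}$, and $a_1,\dots,a_n$ are representatives of the right cosets of $K$ in $G$ ($G=\bigsqcup_i Ka_i$). Then the function $$x\mapsto f(x)\Bigl(\prod_{i=1}^n[a_i,x;f]\Bigr)^m$$ does not depend on the choice of $A$, $K$, $m$ or the coset representatives (subject to the stated conditions); in particular it coincides with the function obtained by taking $K=\mathrm{Stab}_G(f)$ and $A=[G,G;f]$. This function is called the distributed average $\overline{\overline f}$ of $f$.
   Context: For $f:G\to H$ and $a\in G$, $f^a(x)=f(a)^{-1}f(ax)$; $f$ is identity preserving if $f(1)=1$. $\mathrm{Stab}_G(f)=\{a\in G: f^a=f\}$, which is a subgroup when $f$ is identity preserving. The $f$-distributor is $[x,y;f]=f(y)^{-1}f(x)^{-1}f(xy)$, and $[G,G;f]=\langle [x,y;f]: x,y\in G\rangle$. *)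

(* Defs.v *)
(* finite groups G = [set: gT], H = [set: hT]. *)
From HB Require Import structures.
From mathcomp Require Import all_boot all_order all_algebra all_fingroup.
Set Implicit Arguments. Unset Strict Implicit. Unset Printing Implicit Defensive.

Local Open Scope group_scope.

Definition fshift (gT hT : finGroupType) (f : gT -> hT) (a : gT) : gT -> hT :=
  fun x => (f a)^-1 * f (a * x).

Definition Stab (gT hT : finGroupType) (f : gT -> hT) : {set gT} :=
  [set a | [forall x, fshift f a x == f x]].

Definition distr (gT hT : finGroupType) (f : gT -> hT) (x y : gT) : hT :=
  (f y)^-1 * (f x)^-1 * f (x * y).

Definition distrGroup (gT hT : finGroupType) (f : gT -> hT) : {set hT} :=
  <<[set distr f x y | x : gT, y : gT]>>.

Definition expgz (hT : finGroupType) (g : hT) (m : int) : hT :=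
  match m with
  | Posz n => g ^+ n
  | Negz n => (g ^+ n.+1)^-1
  end.

Definition right_transversal_seq (gT : finGroupType) (K : {set gT}) (r : seq gT) : Prop :=
  uniq [seq K :* a | a <- r] /\ [set K :* a | a in r] = rcosets K [set: gT].

Definition inv_mod_index (m : int) (k n : nat) : Prop :=
  (m * k%:Z = 1 %[mod n%:Z])%Z.

Definition admissible (gT hT : finGroupType) (f : gT -> hT)
  (A : {group hT}) (K : {group gT}) (m : int) (r : seq gT) : Prop :=
  [/\ abelian A /\ distrGroup f \subset A, K \subset Stab f,
      coprime #|[set: gT] : K| #|A|,
      inv_mod_index m #|[set: gT] : K| #|A|
    & right_transversal_seq K r].

Definition distavg (gT hT : finGroupType) (f : gT -> hT) (m : int) (r : seq gT)
  (x : gT) : hT :=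
  f x * expgz (\prod_(a <- r) distr f a x) m.

(* Main.v *)
From HB Require Import structures.
Require Import Defs.
From mathcomp Require Import all_boot all_order all_algebra all_fingroup all_solvable.
Set Implicit Arguments. Unset Strict Implicit. Unset Printing Implicit Defensive.
Local Open Scope group_scope.
Definition mulA (hT : finGroupType) (D : {group hT}) (abD : abelian D)
  (u v : subg_of D) : subg_of D := u * v.
Lemma mulAC (hT : finGroupType) (D : {group hT}) (abD : abelian D) :
  commutative (mulA abD).
Proof.
move=> u v; apply: val_inj; rewrite /mulA /= .
by apply: (centsP abD); apply: subgP.
Qed.
HB.instance Definition _ (hT : finGroupType) (D : {group hT}) (abD : abelian D) :=
  Monoid.isComLaw.Build (subg_of D) 1 (mulA abD) (@mulgA _) (@mulAC hT D abD) (@mul1g _).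
Lemma big_expA (hT : finGroupType) (D : {group hT}) (abD : abelian D)
  (I : finType) (P : pred I) (G : I -> subg_of D) k :
  \big[mulA abD/1]_(i | P i) (G i ^+ k) = (\big[mulA abD/1]_(i | P i) G i) ^+ k.
Proof.
elim: k => [|k IH].
  rewrite expg0. apply: big1 => i _. by [].
rewrite expgS -IH.
transitivity (\big[mulA abD/1]_(i | P i) (mulA abD (G i) (G i ^+ k))).
  by apply: eq_bigr => i _; rewrite expgS.
by rewrite big_split.
Qed.
Lemma sgval_big (gT hT : finGroupType) (D : {group hT}) (abD : abelian D) (r : seq gT)
  (F : gT -> hT) :
  {in r, forall a, F a \in D} ->
  \prod_(a <- r) F a = sgval (\big[mulA abD/1]_(a <- r) subg D (F a)).
Proof.
elim: r => [|a r IH] H; first by rewrite !big_nil.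
rewrite !big_cons IH /=; last by move=> b hb; apply: H; rewrite inE hb orbT.
by rewrite subgK //; apply: H; rewrite mem_head.
Qed.
Lemma Stab_mul (gT hT : finGroupType) (f : gT -> hT) a x :
  a \in Stab f -> f (a * x) = f a * f x.
Proof.
rewrite /Stab inE => /forallP H. 
have := eqP (H x). rewrite /fshift => e.
rewrite -e. by rewrite mulKVg.
Qed.
Lemma StabP (gT hT : finGroupType) (f : gT -> hT) a :
  (forall x, f (a * x) = f a * f x) -> a \in Stab f.
Proof. by move=> H; rewrite /Stab inE; apply/forallP => x; rewrite /fshift H mulKg. Qed.

Lemma group_set_Stab (gT hT : finGroupType) (f : gT -> hT) (f1 : f 1 = 1) :
  group_set (Stab f).
Proof.
apply/group_setP; split; first by apply: StabP => x; rewrite mul1g f1 mul1g.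
move=> a b Ha Hb; apply: StabP => x.
rewrite -mulgA (Stab_mul _ Ha) (Stab_mul _ Hb) (Stab_mul _ Ha).
by rewrite mulgA.
Qed.
Definition StabG (gT hT : finGroupType) (f : gT -> hT) (f1 : f 1 = 1) : {group gT} :=
  Group (group_set_Stab f1).

Definition DG (gT hT : finGroupType) (f : gT -> hT) : {group hT} :=
  <<[set distr f x y | x : gT, y : gT]>>%G.

Lemma distr_DG (gT hT : finGroupType) (f : gT -> hT) a x : distr f a x \in DG f.
Proof. by rewrite mem_gen // imset2_f ?inE. Qed.

Lemma distr_Stab (gT hT : finGroupType) (f : gT -> hT) s a x :
  s \in Stab f -> distr f (s * a) x = distr f a x.
Proof.
move=> Hs; rewrite /distr -(mulgA s) (Stab_mul _ Hs) (Stab_mul _ Hs) invMg !mulgA.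
by rewrite mulgKV.
Qed.
Lemma card_cosets_in (gT : finGroupType) (S K : {group gT}) b : K \subset S ->
  #|[set D in rcosets K [set: gT] | S * D == S :* b]| = #|S : K|.
Proof.
move=> sKS.
have -> : [set D in rcosets K [set: gT] | S * D == S :* b] = (fun D => D :* b) @: rcosets K S.
  apply/setP => D; rewrite inE; apply/andP/imsetP.
  - case=> /rcosetsP [a _ ->]; rewrite mulgA mulGSid // => /eqP /rcoset_eqP.
    case/rcosetP => c Hc ->; exists (K :* c); first by apply/rcosetsP; exists c.
    by rewrite rcosetM.
  - case=> E /rcosetsP [c Hc ->] ->; split.
      by apply/rcosetsP; exists (c * b); rewrite ?inE ?rcosetM.
    rewrite -rcosetM mulgA mulGSid //; apply/eqP/rcoset_eqP; apply/rcosetP.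
    by exists c.
by rewrite card_imset //; exact: (can_inj (rcosetK b)).
Qed.

Lemma count_cosets (gT : finGroupType) (S K : {group gT}) (r : seq gT) C :
  K \subset S -> right_transversal_seq K r -> C \in rcosets S [set: gT] ->
  count_mem C [seq S :* a | a <- r] = #|S : K|.
Proof.
move=> sKS [Hu Hs] /rcosetsP [b _ ->].
have E : forall a, S :* a = S * (K :* a) by move=> a; rewrite mulgA mulGSid.
have Ht : forall D, (D \in [seq K :* a | a <- r]) = (D \in rcosets K [set: gT]).
  by move=> D; rewrite -Hs; apply/mapP/imsetP => [][a ha ->]; exists a.
transitivity (count (fun D => S * D == S :* b) [seq K :* a | a <- r]).
  by rewrite !count_map; apply: eq_count => a /=; rewrite E.
rewrite -size_filter.
have/card_uniqP <- := filter_uniq (fun D => S * D == S :* b) Hu.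
rewrite -(card_cosets_in b sKS); apply: eq_card => D.
by rewrite mem_filter !inE Ht andbC.
Qed.

Lemma key (gT hT : finGroupType) (f : gT -> hT) (f1 : f 1 = 1) (abD : abelian (DG f))
  (K : {group gT}) (r : seq gT) x :
  K \subset Stab f -> right_transversal_seq K r ->
  \big[mulA abD/1]_(a <- r) subg (DG f) (distr f a x) =
  (\big[mulA abD/1]_(C in rcosets (StabG f1) [set: gT])
      subg (DG f) (distr f (repr C) x)) ^+ #|StabG f1 : K|.
Proof.
move=> sKS Htr.
set S := StabG f1.
have sKS' : K \subset S by [].
set u := fun a => subg (DG f) (distr f a x).
have Hu : forall a, u a = u (repr (S :* a)).
  move=> a; have := mem_repr_rcoset S a.
  by case/rcosetP => s Hs ->; rewrite /u distr_Stab.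
transitivity (\big[mulA abD/1]_(C <- [seq S :* a | a <- r]) u (repr C)).
  by rewrite big_map; apply: eq_bigr => a _; exact: Hu.
rewrite -big_undup_iterop_count big_uniq ?undup_uniq // -big_expA.
have Hmem : forall C, (C \in undup [seq S :* a | a <- r]) = (C \in rcosets S [set: gT]).
  move=> C; rewrite mem_undup; apply/idP/idP.
    by case/mapP => a _ ->; apply/rcosetsP; exists a; rewrite ?inE.
  case/rcosetsP => b _ ->.
  case: Htr => _ Hs.
  have : K :* b \in rcosets K [set: gT] by apply/rcosetsP; exists b; rewrite ?inE.
  rewrite -Hs => /imsetP [a ha Eab].
  have : b \in K :* a by rewrite -Eab rcoset_refl.
  case/rcosetP => k Hk ->.
  rewrite rcosetM rcoset_id; first exact: map_f.
  exact: (subsetP sKS').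
apply: eq_big => C; first by rewrite Hmem.
move=> HC; rewrite Hmem in HC.
by rewrite (count_cosets sKS' Htr HC).
Qed.

Lemma expg_modz (hT : finGroupType) (w : hT) (n a b : nat) :
  w ^+ n = 1 -> (a%:Z = b%:Z %[mod n%:Z])%Z -> w ^+ a = w ^+ b.
Proof.
move=> Hw; rewrite !modz_nat => [[E]].
by rewrite -(expg_mod a Hw) -(expg_mod b Hw) E.
Qed.

Lemma expgz_mod (hT : finGroupType) (w : hT) (n : nat) (m : int) :
  (0 < n)%N -> w ^+ n = 1 -> expgz w m = w ^+ `|(m %% n%:Z)%Z|%N.
Proof.
move=> n0 Hw.
have ge0 : (0 <= (m %% n%:Z)%Z)%R by apply: modz_ge0; rewrite eqz_nat -lt0n.
have Ee : Posz `|(m %% n%:Z)%Z|%N = (m %% n%:Z)%Z by rewrite gez0_abs.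
case: m ge0 Ee => [k|k] ge0 Ee /=.
  apply: (expg_modz Hw). by rewrite Ee modz_mod.
set e := `|_|%N in Ee *.
have H : w ^+ e * w ^+ k.+1 = 1.
  rewrite -expgnDr -(expg0 w); apply: (expg_modz Hw).
  by rewrite PoszD Ee modzDml NegzE GRing.addNr.
by rewrite -(mulgK (w ^+ k.+1) (w ^+ e)) H mul1g.
Qed.

Lemma sgvalX (hT : finGroupType) (D : {group hT}) (u : subg_of D) k :
  sgval (u ^+ k) = sgval u ^+ k.
Proof. by elim: k => [|k IH] //; rewrite !expgS /= IH. Qed.

Lemma congr_inv (e e' g n : int) :
  (e * g = 1 %[mod n])%Z -> (e' * g = 1 %[mod n])%Z -> (e = e' %[mod n])%Z.
Proof.
move=> H H'.
have E1 : ((e * (e' * g)) %% n = e %% n)%Z by rewrite -modzMmr H' modzMmr GRing.mulr1.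
have E2 : ((e' * (e * g)) %% n = e' %% n)%Z by rewrite -modzMmr H modzMmr GRing.mulr1.
by rewrite -E1 -E2 GRing.mulrCA.
Qed.

Lemma distavg_formula (gT hT : finGroupType) (f : gT -> hT) (f1 : f 1 = 1)
  (abD : abelian (DG f))
  (A : {group hT}) (K : {group gT}) (m : int) (r : seq gT) x :
  admissible f A K m r ->
  distavg f m r x = f x * sgval (\big[mulA abD/1]_(C in rcosets (StabG f1) [set: gT])
      subg (DG f) (distr f (repr C) x)) ^+ `|((m * (#|StabG f1 : K|)%:Z) %% (#|DG f|)%:Z)%Z|%N.
Proof.
case=> _ sKS _ _ Htr.
rewrite /distavg (sgval_big abD) => [|a _]; last exact: distr_DG.
rewrite (key f1 abD x sKS Htr) sgvalX.
set z := sgval _.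
have Hz : z ^+ #|DG f| = 1 by apply: expg_cardG; apply: subgP.
congr (_ * _).
rewrite (@expgz_mod _ _ #|DG f| _ (cardG_gt0 _)); last by rewrite -expgM mulnC expgM Hz expg1n.
rewrite -expgM; apply: (expg_modz Hz).
have n0 : Posz #|DG f| != 0 by rewrite eqz_nat -lt0n cardG_gt0.
rewrite PoszM !gez0_abs ?modz_ge0 //.
by rewrite modzMmr modz_mod GRing.mulrC.
Qed.

Lemma adm_congr (gT hT : finGroupType) (f : gT -> hT) (f1 : f 1 = 1)
  (A : {group hT}) (K : {group gT}) (m : int) (r : seq gT) :
  admissible f A K m r ->
  ((m * Posz #|StabG f1 : K|) * Posz #|[set: gT] : StabG f1| = 1 %[mod Posz #|DG f|])%Z.
Proof.
case=> [[abA sDA]] sKS _ Hinv _.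
have sKS' : K \subset StabG f1 by [].
have dv : (#|DG f| %| #|A|)%N := cardSg sDA.
move: Hinv; rewrite /inv_mod_index -(Lagrange_index (subsetT (StabG f1)) sKS').
rewrite PoszM -GRing.mulrA [X in (m * X)%R]GRing.mulrC GRing.mulrA.
move/eqP; rewrite eqz_mod_dvd => H; apply/eqP; rewrite eqz_mod_dvd.
by apply: dvdz_trans H; rewrite dvdzE.
Qed.

Lemma part1 (gT hT : finGroupType) (f : gT -> hT) (f1 : f 1 = 1)
  (A A' : {group hT}) (K K' : {group gT}) (m m' : int) (r r' : seq gT) :
  admissible f A K m r -> admissible f A' K' m' r' ->
  forall x, distavg f m r x = distavg f m' r' x.
Proof.
move=> H H' x.
have abD : abelian (DG f) by case: H => [[abA sDA]] *; exact: abelianS sDA abA.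
rewrite (distavg_formula f1 abD x H) (distavg_formula f1 abD x H').
by rewrite (congr_inv (adm_congr f1 H) (adm_congr f1 H')).
Qed.

Theorem mainTheorem11 (gT hT : finGroupType) (f : gT -> hT) (f1 : f 1%g = 1%g) :
  (* independence of the choice of A, K, m and coset representatives *)
  (forall (A A' : {group hT}) (K K' : {group gT}) (m m' : int) (r r' : seq gT),
      admissible f A K m r -> admissible f A' K' m' r' ->
      forall x, distavg f m r x = distavg f m' r' x)
  /\
  (* in particular: when some admissible data exist, K = Stab_G(f), A = [G,G;f]
     is admissible (with suitable m and representatives) and gives the same function *)
  (forall (A : {group hT}) (K : {group gT}) (m : int) (r : seq gT),
      admissible f A K m r ->
      exists (S : {group gT}) (D : {group hT}) (m0 : int) (r0 : seq gT),
        [/\ (S : {set gT}) = Stab f, (D : {set hT}) = distrGroup f,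
            admissible f D S m0 r0
          & forall x, distavg f m0 r0 x = distavg f m r x]).
Proof.
split; first exact: part1 f1.
move=> A K m r H.
set S := StabG f1.
pose R := rcosets S [set: gT].
pose r0 := [seq repr C | C <- enum R].
have hrep : forall C, C \in R -> S :* repr C = C.
  by move=> C /rcosetsP [b _ ->]; rewrite rcoset_repr.
have Hadm : admissible f (DG f) S (m * Posz #|S : K|) r0.
  case: (H) => [[abA sDA]] sKS Hcop _ _.
  have sKS' : K \subset S by [].
  split.
  - by split; [exact: abelianS sDA abA | exact: subxx].
  - exact: subxx.
  - apply: (coprime_dvdl (indexgS _ sKS')).
    by apply: (coprime_dvdr (cardSg sDA)).
  - exact: (adm_congr f1 H).
  - split.
      have -> : [seq S :* a | a <- r0] = enum R.
        rewrite -map_comp -[RHS]map_id; apply/eq_in_map => C.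
        by rewrite mem_enum => /hrep.
      exact: enum_uniq.
    apply/setP => C; apply/imsetP/idP => [[a ha ->]|HC].
      case/mapP: ha => C' HC' ->; rewrite hrep //; by rewrite mem_enum in HC'.
    exists (repr C); first by apply: map_f; rewrite mem_enum.
    by rewrite hrep.
exists S, (DG f), (m * Posz #|S : K|)%R, r0; split => //.
by move=> x; apply: part1 f1 _ _ _ _ _ _ _ _ Hadm H x.
Qed.
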